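(* Let $B$ be a connected graded commutative algebra over a field $\mathbb{F}$ admitting an action by graded algebra automorphisms of a finite group $\Gamma$ whose order is prime to the characteristic of $\mathbb{F}$, and let $A$ be a graded $\mathbb{F}$-subalgebra of the invariant ring $B^\Gamma$. If $B/\!\!/A=B/\!\!/B^\Gamma$ (i.e. the ideals of $B$ generated by $A^{\geq1}$ and by $(B^\Gamma)^{\geq1}$ coincide), then $A=B^\Gamma$.
   Context: For a connected graded algebra $C$, $C^{\geq1}$ denotes its augmentation ideal (elements of positive degree). For a map $A\to B$ of connected graded algebras, $B/\!\!/A$ denotes $B/f(A^{\geq1})B$. *)

(* Defs.v *)
From mathcomp Require Import all_boot all_order all_fingroup all_algebra.
Set Implicit Arguments. Unset Strict Implicit. Unset Printing Implicit Defensive.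
Import GRing.Theory.
Local Open Scope ring_scope.

Section GradedDefs.
Variables (F : fieldType) (B : algType F).

(* A (nonnegative, Z_{>=0}-) grading B = (+)_n B_n, given by the family of
   projections pi n : B -> B_n onto the homogeneous components. *)
Definition is_grading (pi : nat -> B -> B) : Prop :=
  (forall n (c : F) (x y : B), pi n (c *: x + y) = c *: pi n x + pi n y) /\
      (forall x, exists N, forall n, (N <= n)%N -> pi n x = 0) /\
      (forall x N, (forall n, (N <= n)%N -> pi n x = 0) ->
                   x = \sum_(n < N) pi n x) /\
      (forall m n x, pi m (pi n x) = if m == n then pi n x else 0) /\
      pi 0%N 1 = 1 /\
      (forall n x y, pi n (x * y) = \sum_(i < n.+1) pi i x * pi (n - i)%N y).

Definition homog (pi : nat -> B -> B) (n : nat) (x : B) : Prop := pi n x = x.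

Definition connected_grading (pi : nat -> B -> B) : Prop :=
  forall x, exists c : F, pi 0%N x = c%:A.

Definition sign_commutative (pi : nat -> B -> B) : Prop :=
  forall m n x y, homog pi m x -> homog pi n y ->
    x * y = ((-1) ^+ (m * n) : F) *: (y * x).

Definition strictly_commutative : Prop := forall x y : B, x * y = y * x.

Definition graded_subalgebra (pi : nat -> B -> B) (A : B -> Prop) : Prop :=
  [/\ A 1,
      (forall (c : F) x y, A x -> A y -> A (c *: x + y)),
      (forall x y, A x -> A y -> A (x * y)) &
      (forall n x, A x -> A (pi n x))].

Definition aug (pi : nat -> B -> B) (C : B -> Prop) : B -> Prop :=
  fun x => C x /\ pi 0%N x = 0.

Definition ideal_gen (S : B -> Prop) : B -> Prop :=
  fun x => exists n (a b : 'I_n -> B),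
    (forall i, S (a i)) /\ x = \sum_(i < n) a i * b i.

End GradedDefs.

Section ActionDefs.
Variables (F : fieldType) (B : algType F) (gT : finGroupType).

Definition graded_alg_action (pi : nat -> B -> B) (act : gT -> B -> B) : Prop :=
  (forall x, act 1%g x = x) /\
      (forall g h x, act (g * h)%g x = act g (act h x)) /\
      (forall g (c : F) x y, act g (c *: x + y) = c *: act g x + act g y) /\
      (forall g x y, act g (x * y) = act g x * act g y) /\
      (forall g, act g 1 = 1) /\
      (forall g n x, act g (pi n x) = pi n (act g x)).

Definition invariants (act : gT -> B -> B) : B -> Prop :=
  fun x => forall g, act g x = x.

End ActionDefs.

(* Main.v *)
Require Import Defs.
From mathcomp Require Import all_boot all_order all_fingroup all_algebra.
Local Open Scope ring_scope.
Import GRing.Theory.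

Section Helpers.
Variables (F : fieldType) (B : algType F) (f : B -> B).
Hypothesis Hf : forall (c : F) x y, f (c *: x + y) = c *: f x + f y.

Lemma lin0 : f 0 = 0.
Proof.
have := Hf 1 0 0; rewrite !scale1r addr0 => /(congr1 (fun z => z - f 0)).
by rewrite addrK subrr => <-.
Qed.
Lemma linD x y : f (x + y) = f x + f y.
Proof. by have := Hf 1 x y; rewrite !scale1r. Qed.
Lemma linZ c x : f (c *: x) = c *: f x.
Proof. by have := Hf c x 0; rewrite !addr0 lin0 addr0. Qed.
Lemma linS (I : Type) (r : seq I) (P : pred I) (G : I -> B) :
  f (\sum_(i <- r | P i) G i) = \sum_(i <- r | P i) f (G i).
Proof. exact: (big_morph f linD lin0). Qed.
End Helpers.
Arguments lin0 {F B f}.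
Arguments linD {F B f}.
Arguments linZ {F B f}.
Arguments linS {F B f} Hf {I}.

Theorem lemmaA12 (F : fieldType) (B : algType F) (pi : nat -> B -> B)
    (gT : finGroupType) (act : gT -> B -> B) (A : B -> Prop) :
  is_grading pi -> connected_grading pi ->
  (strictly_commutative B \/ sign_commutative pi) ->
  graded_alg_action pi act ->
  (#|[set: gT]|)%:R != 0 :> F ->
  graded_subalgebra pi A ->
  (forall x, A x -> invariants act x) ->
  (forall x, ideal_gen (aug pi A) x <-> ideal_gen (aug pi (invariants act)) x) ->
  forall x, A x <-> invariants act x.
Proof.
move=> [Hlin [Hfin [Hsum [Hpp [H1 Hmul]]]]] Hconn _
  [a1 [aM [alin [amul [aone apic]]]]] HG [A1 Alin Amul Api] AI Hid.
have A0 : A 0.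
  by have := Alin (-1) 1 1 A1 A1; rewrite scaleN1r addNr.
have AD x y : A x -> A y -> A (x + y).
  by move=> ax ay; have := Alin 1 x y ax ay; rewrite scale1r.
have AZ c x : A x -> A (c *: x).
  by move=> ax; have := Alin c x 0 ax A0; rewrite addr0.
have AS (I : Type) (r : seq I) (P : pred I) (G : I -> B) :
    (forall i, P i -> A (G i)) -> A (\sum_(i <- r | P i) G i).
  by move=> h; apply: (big_ind A) => //; apply: AD.
have invpi n y : invariants act y -> invariants act (pi n y).
  by move=> iy g; rewrite apic iy.
have main : forall n y, invariants act y -> pi n y = y -> A y.
  elim/ltn_ind => n IH y iy hy.
  case: n IH hy => [|n] IH hy.
    have [c hc] := Hconn y.
    rewrite -hy hc -[c%:A]addr0; exact: Alin.
  have ay : aug pi (invariants act) y.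
    by split => //; rewrite -hy Hpp.
  have [m [a [b [ha ey]]]] : ideal_gen (aug pi A) y.
    apply/Hid; exists 1%N, (fun=> y), (fun=> 1); split => //.
    by rewrite big_ord1 mulr1.
  set N := #|[set: gT]|.
  have sumc (z : B) : \sum_(g : gT) z = z *+ N.
    by rewrite sumr_const /N cardsT; congr (_ *+ _); apply: eq_card.
  pose r i := \sum_(g : gT) act g (b i).
  have ir i : invariants act (r i).
    move=> h; rewrite /r (linS (alin h)).
    rewrite [RHS](reindex_inj (mulgI h)); apply: eq_bigr => g _.
    by rewrite aM.
  have eN : y *+ N = \sum_(i < m) a i * r i.
    rewrite -sumc.
    transitivity (\sum_(g : gT) \sum_(i < m) a i * act g (b i)).
      apply: eq_bigr => g _; rewrite -(iy g) ey (linS (alin g)).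
      apply: eq_bigr => i _; rewrite amul; congr (_ * _).
      by apply: AI; case: (ha i).
    rewrite exchange_big; apply: eq_bigr => i _.
    by rewrite mulr_sumr.
  have ey2 : y = N%:R^-1 *: \sum_(i < m) a i * r i.
    by rewrite -eN -scaler_nat scalerA mulVf // scale1r.
  rewrite -hy ey2 (linZ (Hlin _)) (linS (Hlin _)).
  apply: (AZ); apply: (AS) => i _.
  rewrite Hmul; apply: (AS) => j _.
  case: (ha i) => Aai pai.
  case: j => [[|j] Hj] /=.
    by rewrite pai mul0r.
  apply: (Amul); first exact: (Api).
  apply: (IH (n.+1 - j.+1)%N).
  - by rewrite subSS ltnS leq_subr.
  - exact: (invpi).
  - by rewrite Hpp eqxx.
move=> x; split; first exact: AI.
move=> ix.
have [N hN] := Hfin x.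
rewrite (Hsum x N hN); apply: (AS) => n _.
apply: (main n); first exact: (invpi).
by rewrite Hpp eqxx.
Qed.
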